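(* Let $1\le p,q<\infty$. There is a constant $C(p,q)>0$ depending only on $p,q$ such that for every probability space $(X,\mu)$, every $f\in L_p(X,\mu)$ with $\int f\,d\mu=0$ and every constant $z\in\mathbf{C}$, $$\|M_{p,q}(f)-z\|_{L_q}\ge C(p,q)\,\|f\|_{L_p}^{p/q}.$$
   Context: The Mazur map $M_{p,q}$ sends a measurable $f:X\to\mathbf{C}$ to $M_{p,q}(f)(x)=\mathrm{sign}(f(x))|f(x)|^{p/q}$, where $\mathrm{sign}(z)=z/|z|$ for $z\ne0$ and $\mathrm{sign}(0)=0$. *)

(* Defs.v *)
From HB Require Import structures.
From mathcomp Require Import all_boot all_order all_algebra.
From mathcomp Require Import all_classical all_reals all_analysis.
From mathcomp.real_closed Require Import complex.

Set Implicit Arguments.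
Unset Strict Implicit.
Unset Printing Implicit Defensive.

Import Order.TTheory GRing.Theory Num.Theory.
Local Open Scope ring_scope.

Section Mazur.
Context {R : realType} {T : Type}.

Definition cmod (z : R[i]) : R := Normc.normc z.

Definition csign (z : R[i]) : R[i] :=
  if cmod z == 0 then 0 else z / ((cmod z)%:C)%C.

Definition mazur (p q : R) (f : T -> R[i]) : T -> R[i] :=
  fun x => csign (f x) * (((cmod (f x)) `^ (p / q))%:C)%C.
End Mazur.

Definition cmeasurable {d} {T : measurableType d} {R : realType} (f : T -> R[i]) :=
  measurable_fun setT (fun x => @complex.Re R (f x)) /\ measurable_fun setT (fun x => @complex.Im R (f x)).

Definition cLnorm {d} {T : measurableType d} {R : realType}
  (mu : {measure set T -> \bar R}) (p : R) (f : T -> R[i]) : \bar R :=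
  Lnorm mu p%:E (fun x => (cmod (f x))%:E).

(* Main.v *)
Require Import Defs.
From HB Require Import structures.
From mathcomp Require Import all_boot all_order all_algebra.
From mathcomp Require Import all_classical all_reals all_analysis.
From mathcomp.real_closed Require Import complex.
From mathcomp Require Import ring lra.
From mathcomp Require Import measurable_realfun.
Import Order.TTheory GRing.Theory Num.Theory.
Local Open Scope ring_scope.
Section Help.
Local Open Scope complex_scope.

Lemma mazur_comp (R : realType) (T : Type) (p q : R) (f : T -> R[i]) x :
  complex.Re (mazur p q f x) = (cmod (f x)) `^ (p/q - 1) * complex.Re (f x) /\
  complex.Im (mazur p q f x) = (cmod (f x)) `^ (p/q - 1) * complex.Im (f x).
Proof.
rewrite /mazur /csign /cmod. case: (f x) => a b.
have := @Normc.eq0_normc R (a +i* b).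
rewrite /Normc.normc. set n := Num.sqrt _.
case: eqP => [n0 h|n0 _]. 
  have := h n0. case=> -> ->. by rewrite !mulr0 /= !mul0r subr0 addr0.
simpl.
have n0' : n != 0 by apply/eqP.
rewrite powRB; last by rewrite n0' implybT.
rewrite powRr1; last by rewrite sqrtr_ge0.
by split; field.
Qed.

Lemma cmodE (R : realType) (w : R[i]) : cmod w = Num.sqrt (complex.Re w ^+ 2 + complex.Im w ^+ 2).
Proof. by case: w. Qed.
Lemma ReB (R : realType) (u v : R[i]) : complex.Re (u - v) = complex.Re u - complex.Re v.
Proof. by case: u; case: v. Qed.
Lemma ImB (R : realType) (u v : R[i]) : complex.Im (u - v) = complex.Im u - complex.Im v.
Proof. by case: u; case: v. Qed.
End Help.


Lemma sq_le (R : realType) (x y : R) : 0 <= y -> x ^+ 2 <= y ^+ 2 -> x <= y.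
Proof. move=> y0 h. nra. Qed.

Lemma geom (R : realType) (G Z D s r : R) : 0 <= G -> 0 <= Z -> 0 <= D ->
  D ^+ 2 = G ^+ 2 + Z ^+ 2 - 2 * s -> s ^+ 2 + r ^+ 2 = G ^+ 2 * Z ^+ 2 ->
  r ^+ 2 <= D ^+ 2 * Z ^+ 2 ->
  [/\ G - Z <= D, Z - G <= D, (s <= 0 -> G <= D /\ Z <= D) &
     (0 < Z -> 4 * s ^+ 2 < G ^+ 2 * Z ^+ 2 -> G <= 2 * D)].
Proof.
move=> G0 Z0 D0 hD hL hr.
have sGZ : s <= G * Z by apply: sq_le; [nra|nra].
split.
- apply: sq_le => //; nra.
- apply: sq_le => //; nra.
- move=> s0; split; apply: sq_le => //; nra.
- move=> Zp hs. have : (G * Z) ^+ 2 <= (2 * D * Z) ^+ 2 by nra.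
  move=> h. have : G * Z <= 2 * D * Z by apply: sq_le => //; nra.
  move=> h2. nra.
Qed.

Lemma lagr (R : realType) (x1 x2 y1 y2 : R) :
  (x1 * y1 + x2 * y2) ^+ 2 + (x1 * y2 - x2 * y1) ^+ 2 = (x1 ^+ 2 + x2 ^+ 2) * (y1 ^+ 2 + y2 ^+ 2).
Proof. ring. Qed.

Lemma powle {R : realType} {x y r : R} : 0 <= x -> x <= y -> 0 <= r -> x `^ r <= y `^ r.
Proof.
move=> x0 xy r0; apply: (ge0_ler_powR r0) => //; rewrite nnegrE //; exact: le_trans xy.
Qed.

Lemma mazur_point (R : realType) (p q fr fi zr zi : R) : 1 <= p -> 1 <= q ->
 let a := Num.sqrt (fr ^+ 2 + fi ^+ 2) in
 let lam := a `^ (p / q - 1) in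
 let D := Num.sqrt ((lam * fr - zr) ^+ 2 + (lam * fi - zi) ^+ 2) in
 let Z := Num.sqrt (zr ^+ 2 + zi ^+ 2) in
 let W := Z `^ (q - q / p) in
 let s := (zr * fr + zi * fi) / Z in
 a `^ p <= 2 `^ q * D `^ q + 2 `^ (q + 1) * W * `|s| /\
 W * Num.max (- s) 0 <= D `^ q.
Proof.
move=> p1 q1 a lam D Z W s.
have p0 : p != 0 by apply/eqP => h; move: p1; rewrite h; lra.
have q0 : q != 0 by apply/eqP => h; move: q1; rewrite h; lra.
have pp : 0 < p by lra.
have qp : 0 < q by lra.
have pq0 : p / q != 0 by rewrite mulf_eq0 negb_or p0 invr_eq0 q0.
have a0 : 0 <= a by exact: sqrtr_ge0.
have Z0 : 0 <= Z by exact: sqrtr_ge0.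
have D0 : 0 <= D by exact: sqrtr_ge0.
have lam0 : 0 <= lam by exact: powR_ge0.
have W0 : 0 <= W by exact: powR_ge0.
set G := a `^ (p / q).
have G0 : 0 <= G by exact: powR_ge0.
have hG : G = lam * a.
  rewrite /G /lam -{3}(powRr1 a0) -powRD; first by congr (_ `^ _); ring.
  have -> : p / q - 1 + 1 = p / q by ring.
  by rewrite (negbTE pq0).
have ha2 : a ^+ 2 = fr ^+ 2 + fi ^+ 2 by rewrite sqr_sqrtr // addr_ge0 // sqr_ge0.
have hZ2 : Z ^+ 2 = zr ^+ 2 + zi ^+ 2 by rewrite sqr_sqrtr // addr_ge0 // sqr_ge0.
have hD2 : D ^+ 2 = (lam * fr - zr) ^+ 2 + (lam * fi - zi) ^+ 2 by rewrite sqr_sqrtr // addr_ge0 // sqr_ge0.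
have hap : a `^ p = G `^ q.
  by rewrite /G -powRrM; congr (_ `^ _); field.
set sg := lam * fr * zr + lam * fi * zi.
set rh := lam * fr * zi - lam * fi * zr.
have hGs : G ^+ 2 = (lam * fr) ^+ 2 + (lam * fi) ^+ 2.
  by rewrite hG exprMn ha2; ring.
have [gA gB gC gD] : [/\ G - Z <= D, Z - G <= D, (sg <= 0 -> G <= D /\ Z <= D) &
     (0 < Z -> 4 * sg ^+ 2 < G ^+ 2 * Z ^+ 2 -> G <= 2 * D)].
  apply: (@geom _ _ _ _ _ rh) => //.
  - by rewrite hD2 hGs hZ2 /sg; ring.
  - by rewrite hGs hZ2 /sg /rh lagr.
  - rewrite hD2 hZ2 /rh.
    set u := lam * fr - zr; set v := lam * fi - zi.
    have -> : (lam * fr * zi - lam * fi * zr) = u * zi - v * zr by rewrite /u /v; ring.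
    have -> : (u ^+ 2 + v ^+ 2) * (zr ^+ 2 + zi ^+ 2) = (u * zi - v * zr) ^+ 2 + (u * zr + v * zi) ^+ 2 by ring.
    by rewrite lerDl sqr_ge0.
have two_q : 1 <= 2 `^ q.
  by rewrite -[X in X <= _](powRr0 2); apply: ler_powR; lra.
have hGq : G <= 2 * D -> a `^ p <= 2 `^ q * D `^ q.
  move=> h; rewrite hap -powRM; [|lra|done].
  exact: powle G0 h (ltW qp).
have zs : 0 <= Z -> zr * fr + zi * fi = Z * s.
  move=> _; rewrite /s; have [Ze|Zn] := eqVneq Z 0.
    have : zr ^+ 2 + zi ^+ 2 = 0 by rewrite -hZ2 Ze expr0n.
    move=> /eqP; rewrite paddr_eq0 ?sqr_ge0 // !sqrf_eq0 => /andP[/eqP zr0 /eqP zi0].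
    by rewrite Ze zr0 zi0; ring.
  by field.
have hGdef : G = a `^ (p / q) by [].
have hWdef : W = Z `^ (q - q / p) by [].
have hsdef : s = (zr * fr + zi * fi) / Z by [].
have hsgdef : sg = lam * fr * zr + lam * fi * zi by [].
clearbody a lam D Z W s G sg rh.
split.
- have [h|h] := leP G (2 * D).
    apply: le_trans (hGq h) _. rewrite lerDl.
    by rewrite mulr_ge0 ?normr_ge0 // mulr_ge0 // powR_ge0.
  have Zp : 0 < Z.
    rewrite lt_neqAle Z0 andbT; apply/eqP => Ze; move: gA; rewrite -Ze; lra.
  have G2Z : G <= 2 * Z by lra.
  have hsg : G ^+ 2 * Z ^+ 2 <= 4 * sg ^+ 2.
    rewrite leNgt; apply/negP => hh; have := gD Zp hh; lra.
  have Gp : 0 < G by lra.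
  have ap : 0 < a.
    rewrite lt_neqAle a0 andbT; apply/eqP => ae; move: Gp; rewrite hG -ae mulr0; lra.
  have lamp : 0 < lam.
    rewrite lt_neqAle lam0 andbT; apply/eqP => le; move: Gp; rewrite hG -le mul0r; lra.
  have hsg' : sg = lam * Z * s.
    rewrite hsgdef; transitivity (lam * (zr * fr + zi * fi)); first by ring.
    by rewrite zs //; ring.
  have a2s : a <= 2 * `|s|.
    have lZ : 0 < lam * Z by exact: mulr_gt0.
    have h4 : (lam * Z) ^+ 2 * a ^+ 2 <= (lam * Z) ^+ 2 * (4 * s ^+ 2).
      have e1 : (lam * Z) ^+ 2 * a ^+ 2 = (lam * a) ^+ 2 * Z ^+ 2 by ring.
      have e2 : (lam * Z) ^+ 2 * (4 * s ^+ 2) = 4 * (lam * Z * s) ^+ 2 by ring.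
      by rewrite e1 e2 -hG -hsg'.
    have h5 : a ^+ 2 <= 4 * s ^+ 2.
      by rewrite -(ler_pM2l (exprn_gt0 2 lZ)).
    have [s0|s0] := leP 0 s.
      rewrite ger0_norm //; apply: sq_le; first by rewrite mulr_ge0.
      by have -> : (2 * s) ^+ 2 = 4 * s ^+ 2 by ring.
    rewrite ltr0_norm //; apply: sq_le; first by rewrite mulr_ge0 // oppr_ge0 ltW.
    by have -> : (2 * - s) ^+ 2 = 4 * s ^+ 2 by ring.
  have aG : a = G `^ (q / p).
    by rewrite hGdef -powRrM (_ : p / q * (q / p) = 1) ?powRr1 //; field; rewrite q0 p0.
  have a2Z : a <= (2 * Z) `^ (q / p).
    by rewrite aG; apply: powle => //; rewrite divr_ge0 // ltW.
  have e0 : 0 <= p - 1 by lra.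
  have hap1 : a `^ (p - 1) <= 2 `^ q * W.
    apply: le_trans (powle a0 a2Z e0) _.
    rewrite -powRrM (_ : q / p * (p - 1) = q - q / p); last by field.
    rewrite powRM; [|by rewrite ler0n|done].
    rewrite hWdef; apply: ler_wpM2r; first exact: powR_ge0.
    apply: ler_powR; first by rewrite ler1n.
    by rewrite gerBl divr_ge0 // ltW.
  have hsplit : a `^ p = a `^ (p - 1) * a.
    rewrite -{3}(powRr1 a0) -powRD; first by congr (_ `^ _); ring.
    have -> : p - 1 + 1 = p by ring.
    by rewrite (negbTE p0).
  have h2 : 2 `^ (q + 1) = 2 `^ q * 2.
    have n20 : (2:R) != 0 by rewrite pnatr_eq0.
    rewrite powRD; last by rewrite n20 implybT.
    by rewrite powRr1 // ler0n.
  rewrite hsplit; apply: le_trans (_ : _ <= 2 `^ (q + 1) * W * `|s|) _.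
    rewrite h2 (_ : 2 `^ q * 2 * W * `|s| = (2 `^ q * W) * (2 * `|s|)); last by ring.
    by apply: ler_pM => //; exact: powR_ge0.
  by rewrite lerDr mulr_ge0 // powR_ge0.
- have [s0|s0] := leP 0 s.
    rewrite max_r; first by rewrite mulr0 powR_ge0.
    lra.
  rewrite max_l; last lra.
  have Zn : Z != 0 by apply/eqP => Ze; move: s0; rewrite hsdef Ze invr0 mulr0; lra.
  have Zp : 0 < Z by rewrite lt_neqAle Z0 andbT eq_sym.
  have hsg : sg <= 0.
    have -> : sg = lam * (zr * fr + zi * fi) by rewrite hsgdef; ring.
    rewrite zs //; apply: mulr_ge0_le0 => //; apply: mulr_ge0_le0; lra.
  have [GD ZD] := gC hsg.
  have sa : - s <= a.
    have h : (Z * s) ^+ 2 <= (Z * a) ^+ 2.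
      rewrite -zs // !exprMn hZ2 ha2.
      have -> : (zr ^+ 2 + zi ^+ 2) * (fr ^+ 2 + fi ^+ 2) = (zr * fr + zi * fi) ^+ 2 + (zr * fi - zi * fr) ^+ 2 by ring.
      by rewrite lerDl sqr_ge0.
    have : (Z * s) ^+ 2 <= (Z * a) ^+ 2 -> s ^+ 2 <= a ^+ 2.
      by rewrite !exprMn ler_pM2l // exprn_gt0.
    by move=> /(_ h) h'; apply: sq_le => //; rewrite sqrrN.
  apply: (@le_trans _ _ (W * a)); first by apply: ler_wpM2l.
  have e0 : 0 <= p - 1 by lra.
  have hsplit : a `^ p = a `^ (p - 1) * a.
    rewrite -{3}(powRr1 a0) -powRD; first by congr (_ `^ _); ring.
    have -> : p - 1 + 1 = p by ring.
    by rewrite (negbTE p0).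
  have hW : W = (Z `^ (q / p)) `^ (p - 1).
    by rewrite -powRrM hWdef; congr (_ `^ _); field.
  have [aw|wa] := leP a (Z `^ (q / p)).
    apply: (@le_trans _ _ (W * Z `^ (q / p))); first by apply: ler_wpM2l.
    rewrite hWdef -powRD; last by rewrite (_ : q - q / p + q / p = q) ?(negbTE q0) //; ring.
    rewrite (_ : q - q / p + q / p = q); last by ring.
    exact: powle Z0 ZD (ltW qp).
  apply: (@le_trans _ _ (a `^ (p - 1) * a)).
    rewrite ler_wpM2r // hW; apply: powle => //; [exact: powR_ge0|exact: ltW].
  rewrite -hsplit hap; apply: powle => //; lra.
Qed.

Theorem lemma5p1 (R : realType) (p q : R) (hp : 1 <= p) (hq : 1 <= q) :
  exists C : R, 0 < C /\
  forall (d : measure_display) (X : measurableType d)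
         (mu : probability X R) (f : X -> R[i]),
    cmeasurable f ->
    (cLnorm mu p f < +oo)%E ->
    (\int[mu]_x (@complex.Re R (f x))%:E = 0)%E ->
    (\int[mu]_x (@complex.Im R (f x))%:E = 0)%E ->
    forall z : R[i],
      (cLnorm mu q (fun x => (mazur p q f x - z)%R)
         >= C%:E * (cLnorm mu p f) `^ (p / q)%R)%E.
Proof.
set K1 := 2 `^ q; set K2 := 2 `^ (q + 1); set Kt := K1 + 2 * K2.
have K10 : 0 < K1 by rewrite powR_gt0.
have K20 : 0 < K2 by rewrite powR_gt0.
have Kt0 : 0 < Kt by rewrite /Kt; lra.
exists ((Kt^-1) `^ (q^-1)); split; first by rewrite powR_gt0 // invr_gt0.
move=> d X mu f [mfr mfi] hLp hRe hIm z.
set fr := fun x => complex.Re (f x).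
set fi := fun x => complex.Im (f x).
set zr := complex.Re z. set zi := complex.Im z.
set a := fun x => Num.sqrt (fr x ^+ 2 + fi x ^+ 2).
set lam := fun x => a x `^ (p / q - 1).
set D := fun x => Num.sqrt ((lam x * fr x - zr) ^+ 2 + (lam x * fi x - zi) ^+ 2).
set Z := Num.sqrt (zr ^+ 2 + zi ^+ 2).
set W := Z `^ (q - q / p).
set s := fun x => (zr * fr x + zi * fi x) / Z.
have ha : forall x, cmod (f x) = a x by move=> x; rewrite cmodE.
have hD : forall x, cmod (mazur p q f x - z) = D x.
  move=> x; rewrite cmodE; have [h1 h2] := mazur_comp _ _ p q f x.
  by rewrite /D /lam -ha -h1 -h2 /zr /zi ReB ImB.
have msqrt : measurable_fun [set: R] (@Num.sqrt R).
  exact: measurable_realfun.continuous_measurable_fun (@sqrt_continuous R).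
have ma : measurable_fun [set: X] a.
  apply: measurableT_comp => //; apply: measurable_realfun.measurable_funD; exact: measurable_realfun.measurable_funX.
have mlam : measurable_fun [set: X] lam.
  exact: measurableT_comp (measurable_realfun.measurable_powR _) ma.
have mD : measurable_fun [set: X] D.
  apply: measurableT_comp => //; apply: measurable_realfun.measurable_funD; apply: measurable_realfun.measurable_funX;
  apply: measurable_realfun.measurable_funB => //; exact: measurable_realfun.measurable_funM.
have ms : measurable_fun [set: X] s.
  apply: measurable_realfun.measurable_funM => //; apply: measurable_realfun.measurable_funD; exact: measurable_realfun.measurable_funM.
set A := (\int[mu]_x ((a x) `^ p)%:E)%E.
set E := (\int[mu]_x ((D x) `^ q)%:E)%E.
have hLA : cLnorm mu p f = (A `^ p^-1)%E.
  rewrite /cLnorm unlock /Lnorm /A; congr (_ `^ _)%E; apply: eq_integral => x _.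
  by rewrite /= ger0_norm ?ha // sqrtr_ge0.
have hLE : cLnorm mu q (fun x => mazur p q f x - z) = (E `^ q^-1)%E.
  rewrite /cLnorm unlock /Lnorm /E; congr (_ `^ _)%E; apply: eq_integral => x _.
  by rewrite /= ger0_norm ?hD // sqrtr_ge0.
have A0 : (0 <= A)%E by apply: integral_ge0 => x _; rewrite lee_fin powR_ge0.
have E0 : (0 <= E)%E by apply: integral_ge0 => x _; rewrite lee_fin powR_ge0.
suff key : ((Kt^-1)%:E * A <= E)%E.
  rewrite hLA hLE -poweRrM (_ : p^-1 * (p / q) = q^-1); last first.
    by field; apply/andP; split; apply/eqP; lra.
  rewrite -poweR_EFin -poweRM; [| by rewrite lee_fin invr_ge0 ltW | exact: A0].
  apply: gt0_ler_poweR => //; first by rewrite invr_ge0; lra.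
  - rewrite in_itv; apply/andP; split; last exact: leey.
    by apply: mule_ge0; [rewrite lee_fin invr_ge0 ltW | exact: A0].
  - by rewrite in_itv; apply/andP; split; [exact: E0 | exact: leey].
have Afin : (A < +oo)%E.
  have p0 : p^-1 != 0 by rewrite invr_eq0 gt_eqF // (lt_le_trans ltr01 hp).
  rewrite ltey; apply/negP => /eqP hA; move: hLp; rewrite hLA hA poweRyr //.
have intap : mu.-integrable [set: X] (fun x => ((a x) `^ p)%:E).
  apply/integrableP; split.
    by apply/measurable_realfun.measurable_EFinP; exact: measurableT_comp (measurable_realfun.measurable_powR _) ma.
  rewrite (eq_integral (fun x => ((a x) `^ p)%:E)) //.
  by move=> x _; rewrite /= ger0_norm // powR_ge0.
have intdom : mu.-integrable [set: X] (fun x => (1 + (a x) `^ p)%:E).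
  apply: (eq_integrable measurableT (fun x => (EFin \o cst 1%R) x + ((a x) `^ p)%:E)%E); last first.
    exact: (integrableD measurableT (finite_measure_integrable_cst mu 1%R measurableT) intap).
  by move=> x _; rewrite /= EFinD.
have ale : forall x, a x <= 1 + (a x) `^ p.
  move=> x; have a0 : 0 <= a x by exact: sqrtr_ge0.
  have [a1|a1] := leP (a x) 1.
    by rewrite ler_wpDr ?powR_ge0.
  apply: le_trans (_ : (a x) `^ p <= _); last by rewrite lerDr.
  by rewrite -[X in X <= _](powRr1 a0); apply: ler_powR; lra.
have frle : forall x, `|fr x| <= a x.
  move=> x; apply: sq_le; first exact: sqrtr_ge0.
  by rewrite real_normK ?num_real // sqr_sqrtr ?addr_ge0 ?sqr_ge0 // lerDl sqr_ge0.
have file : forall x, `|fi x| <= a x.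
  move=> x; apply: sq_le; first exact: sqrtr_ge0.
  by rewrite real_normK ?num_real // sqr_sqrtr ?addr_ge0 ?sqr_ge0 // lerDr sqr_ge0.
have intfr : mu.-integrable [set: X] (fun x => (fr x)%:E).
  apply: (le_integrable measurableT _ _ intdom) => //; first exact/measurable_realfun.measurable_EFinP.
  move=> x _ /=; rewrite lee_fin (@ger0_norm _ (1 + a x `^ p)); last by rewrite addr_ge0 // powR_ge0.
  exact: le_trans (frle x) (ale x).
have intfi : mu.-integrable [set: X] (fun x => (fi x)%:E).
  apply: (le_integrable measurableT _ _ intdom) => //; first exact/measurable_realfun.measurable_EFinP.
  move=> x _ /=; rewrite lee_fin (@ger0_norm _ (1 + a x `^ p)); last by rewrite addr_ge0 // powR_ge0.
  exact: le_trans (file x) (ale x).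
have hsE : (fun x => (s x)%:E) = ((fun x => (zr / Z)%:E * (fr x)%:E) \+ (fun x => (zi / Z)%:E * (fi x)%:E))%E.
  by apply/funext => x /=; rewrite -!EFinM -EFinD /s mulrDl (mulrAC zr) (mulrAC zi).
have ints : mu.-integrable [set: X] (fun x => (s x)%:E).
  by rewrite hsE; apply: integrableD => //; apply: integrableZl.
have int0 : (\int[mu]_x (s x)%:E = 0)%E.
  rewrite hsE integralD //; try by apply: integrableZl.
  by rewrite !integralZl // hRe hIm !mule0 adde0.
set Se := fun x => (s x)%:E.
have hpn : (\int[mu]_x Se^\+ x = \int[mu]_x Se^\- x)%E.
  have h1 := integral_funepos_lt_pinfty measurableT ints.
  have h2 := integral_funeneg_lt_pinfty measurableT ints.
  have g1 : (0 <= \int[mu]_x Se^\+ x)%E by apply: integral_ge0 => x _; exact: funepos_ge0.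
  have g2 : (0 <= \int[mu]_x Se^\- x)%E by apply: integral_ge0 => x _; exact: funeneg_ge0.
  move: int0; rewrite integralE; move: h1 h2 g1 g2.
  case: (\int[mu]_x Se^\+ x)%E => // m; case: (\int[mu]_x Se^\- x)%E => // n.
  move=> _ _ _ _ /= /eqP; rewrite -EFinB eqe subr_eq0 => /eqP -> //.
have pt : forall x, (a x) `^ p <= K1 * (D x) `^ q + K2 * W * `|s x| /\
    W * Num.max (- s x) 0 <= (D x) `^ q.
  move=> x; have h := @mazur_point _ p q (fr x) (fi x) zr zi hp hq. exact: h.
have hsn : forall x, (Se^\- x = (Num.max (- s x) 0)%:E)%E.
  by move=> x; rewrite funenegE /Se EFin_max.
have habs : forall x, (`|s x|)%:E = (Se^\+ x + Se^\- x)%E.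
  by move=> x; have := congr1 (fun h => h x) (fune_abse Se).
have mSe : measurable_fun [set: X] (fun x => (s x)%:E) by apply/measurable_realfun.measurable_EFinP.
have msp := measurable_realfun.measurable_funepos mSe.
have msn := measurable_realfun.measurable_funeneg mSe.
have mDq : measurable_fun [set: X] (fun x => ((D x) `^ q)%:E).
  by apply/measurable_realfun.measurable_EFinP; exact: measurableT_comp (measurable_realfun.measurable_powR _) mD.
have step1 : (A <= \int[mu]_x ((K1%:E * ((D x) `^ q)%:E) + (K2 * W)%:E * (Se^\+ x + Se^\- x)))%E.
  apply: ge0_le_integral => //.
  - by move=> x _; rewrite lee_fin powR_ge0.
  - by apply/measurable_realfun.measurable_EFinP; exact: measurableT_comp (measurable_realfun.measurable_powR _) ma.
  - apply: emeasurable_funD; first exact: emeasurable_funM.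
    by apply: emeasurable_funM => //; exact: emeasurable_funD.
  - move=> x _; rewrite -habs -!EFinM -EFinD lee_fin; exact: (pt x).1.
have f10 : forall x, [set: X]%classic x -> (0 <= ((D x) `^ q)%:E)%E.
  by move=> x _; rewrite lee_fin powR_ge0.
have I1 : (\int[mu]_x (K1%:E * ((D x) `^ q)%:E) = K1%:E * E)%E.
  exact: (ge0_integralZl_EFin mu measurableT f10 mDq (ltW K10)).
have f20 : forall x, [set: X]%classic x -> (0 <= Se^\+ x + Se^\- x)%E.
  by move=> x _; exact: adde_ge0 (funepos_ge0 _ _) (funeneg_ge0 _ _).
have mpn : measurable_fun [set: X] (fun x => Se^\+ x + Se^\- x)%E.
  exact: emeasurable_funD.
have K2W0 : 0 <= K2 * W by rewrite mulr_ge0 ?powR_ge0 // ltW.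
have I2 : (\int[mu]_x ((K2 * W)%:E * (Se^\+ x + Se^\- x)) = (K2 * W)%:E * (\int[mu]_x Se^\+ x + \int[mu]_x Se^\- x))%E.
  rewrite (ge0_integralZl_EFin mu measurableT f20 mpn K2W0).
  by rewrite ge0_integralD.
have step2 : (\int[mu]_x ((K1%:E * ((D x) `^ q)%:E) + (K2 * W)%:E * (Se^\+ x + Se^\- x))
    = K1%:E * E + (K2 * W)%:E * (\int[mu]_x Se^\- x + \int[mu]_x Se^\- x))%E.
  rewrite ge0_integralD //.
  - by rewrite I1 I2 hpn.
  - by move=> x _; apply: mule_ge0; [rewrite lee_fin ltW | exact: f10].
  - exact: emeasurable_funM.
  - by move=> x _; apply: mule_ge0; [rewrite lee_fin | exact: f20].
  - exact: emeasurable_funM.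
have In0 : (0 <= \int[mu]_x Se^\- x)%E by apply: integral_ge0 => x _.
have step3 : (W%:E * \int[mu]_x Se^\- x <= E)%E.
  have fn0 : forall x, [set: X]%classic x -> (0 <= Se^\- x)%E.
    by move=> x _; exact: funeneg_ge0.
  have W0 : 0 <= W by exact: powR_ge0.
  rewrite -(ge0_integralZl_EFin mu measurableT fn0 msn W0).
  apply: ge0_le_integral.
  - exact: measurableT.
  - by move=> x _; apply: mule_ge0; [rewrite lee_fin | exact: fn0].
  - exact: emeasurable_funM.
  - exact: mDq.
  - by move=> x _; rewrite hsn -EFinM lee_fin; exact: (pt x).2.
have step4 : ((K2 * W)%:E * (\int[mu]_x Se^\- x + \int[mu]_x Se^\- x) <= (2 * K2)%:E * E)%E.
  rewrite EFinM -muleA ge0_muleDr //.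
  have e2 : (2%:E = 1 + 1 :> \bar R)%E by rewrite -EFinD.
  have -> : ((2 * K2)%:E * E = K2%:E * (E + E))%E.
    rewrite mulrC EFinM -muleA; congr (_ * _)%E.
    by rewrite e2 ge0_muleDl // mul1e.
  apply: lee_wpmul2l; first by rewrite lee_fin ltW.
  exact: leeD.
have hAK : (A <= Kt%:E * E)%E.
  apply: (le_trans step1); rewrite step2.
  rewrite /Kt EFinD ge0_muleDl; [| by rewrite lee_fin; exact: ltW | by rewrite lee_fin mulr_ge0 //; exact: ltW].
  by apply: leeD; [exact: lexx | exact: step4].
have h0 : (0 <= (Kt^-1)%:E)%E by rewrite lee_fin invr_ge0; exact: ltW.
apply: (le_trans (lee_wpmul2l h0 hAK)).
rewrite muleA -EFinM mulVf; last exact: (lt0r_neq0 Kt0).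
rewrite mul1e; exact: lexx.
Qed.
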